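(* Let $A$ be a real symmetric positive semidefinite $n\times n$ matrix, $P$ an orthogonal projection matrix, $T\in\{1,\dots,n\}$, and $u>\lambda_{\max}(A)$. Then $$\sum_{i=n-T+1}^n\frac{1}{u-\lambda_i(PAP)}\le\sum_{i=n-T+1}^n\frac{1}{u-\lambda_i(A)}.$$
   Context: Eigenvalues $\lambda_1\le\dots\le\lambda_n$ of a symmetric matrix are listed in increasing order. *)

(* Defs.v *)
From HB Require Import structures.
From mathcomp Require Import all_boot all_order all_algebra.
From mathcomp Require Import reals.
From Stdlib Require Import ClassicalEpsilon.
Set Implicit Arguments. Unset Strict Implicit. Unset Printing Implicit Defensive.
Import Order.TTheory GRing.Theory Num.Theory.
Local Open Scope ring_scope.

(* Such a sequence
   exists for symmetric real matrices (spectral theorem); otherwise the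
   definition returns an unspecified sequence. *)
Definition eigen_seq (R : realType) (n : nat) (A : 'M[R]_n) : seq R :=
  epsilon (inhabits [::])
    (fun s : seq R => sorted <=%R s /\
       char_poly A = \prod_(x <- s) ('X - x%:P)).

(* lambda A i = lambda_{i+1}(A) : the (i+1)-th smallest eigenvalue (0-based i). *)
Definition eigval (R : realType) (n : nat) (A : 'M[R]_n) (i : nat) : R :=
  nth 0 (eigen_seq A) i.

Definition lambda_max (R : realType) (n : nat) (A : 'M[R]_n) : R :=
  eigval A n.-1.

Definition symmetricmx (R : realType) (n : nat) (A : 'M[R]_n) : Prop :=
  A^T = A.

Definition psdmx (R : realType) (n : nat) (A : 'M[R]_n) : Prop :=
  symmetricmx A /\ forall v : 'cV[R]_n, 0 <= (v^T *m A *m v) 0 0.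

Definition orth_projmx (R : realType) (n : nat) (P : 'M[R]_n) : Prop :=
  P^T = P /\ P *m P = P.

(* Main.v *)
Require Import Defs.
From HB Require Import structures.
From mathcomp Require Import all_boot all_order all_algebra.
From mathcomp Require Import reals.
From mathcomp Require Import zify complex.
From Stdlib Require Import ClassicalEpsilon.
Set Implicit Arguments. Unset Strict Implicit. Unset Printing Implicit Defensive.
Import Order.TTheory GRing.Theory Num.Theory.
Local Open Scope ring_scope.
Local Open Scope sesquilinear_scope.

Lemma char_poly_conj (F : fieldType) n (U D : 'M[F]_n) : U \in unitmx ->
  char_poly (invmx U *m D *m U) = char_poly D.
Proof.
move=> Uu; rewrite /char_poly /char_poly_mx.
set V := map_mx polyC U; set Vi := map_mx polyC (invmx U).
have ViV : Vi *m V = 1%:M by rewrite /Vi /V -map_mxM mulVmx // map_mx1.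
have -> : 'X%:M - map_mx polyC (invmx U *m D *m U) = Vi *m ('X%:M - map_mx polyC D) *m V.
  rewrite mulmxBr mulmxBl !map_mxM -/V -/Vi; congr (_ - _).
  by rewrite mul_mx_scalar -scalemxAl ViV scalemx1.
by rewrite !det_mulmx mulrAC -det_mulmx ViV det1 mul1r.
Qed.

Lemma natfact (a b c k s m : nat) : (k < a)%N -> (k + s = m)%N -> (b <= m)%N ->
  (b + c = a + s)%N -> (0 < c)%N.
Proof. lia. Qed.

Section Core.
Variable C : numClosedFieldType.
Variable n : nat.

Definition qf (M : 'M[C]_n) (x : 'rV[C]_n) : C := (x *m M *m x ^t*) 0 0.
Definition q1 (x : 'rV[C]_n) : C := (x *m x ^t*) 0 0.

Lemma q1E x : q1 x = \sum_j x 0 j * (x 0 j)^*.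
Proof. by rewrite /q1 mxE; apply: eq_bigr => j _; rewrite !mxE. Qed.

Lemma q1_ge0 x : 0 <= q1 x.
Proof. by rewrite q1E; apply: sumr_ge0 => j _; exact: mul_conjC_ge0. Qed.

Lemma q1_gt0 x : x != 0 -> 0 < q1 x.
Proof.
move=> xn0; have [j xj] : exists j, x 0 j != 0.
  apply/existsP; apply: contraR xn0 => /existsPn H; apply/eqP/rowP => j.
  by rewrite mxE; apply/eqP; move: (H j); rewrite negbK.
rewrite q1E (bigD1 j) //=.
have H1 : 0 < x 0 j * (x 0 j)^* by rewrite mul_conjC_gt0.
have H2 : 0 <= \sum_(i < n | i != j) x 0 i * (x 0 i)^*.
  by apply: sumr_ge0 => k _; exact: mul_conjC_ge0.
by have := ltr_leD H1 H2; rewrite addr0.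
Qed.

Variables (U : 'M[C]_n) (d : 'rV[C]_n).
Hypothesis Uu : U \is unitarymx.
Hypothesis dreal : forall j, d 0 j \is Num.real.

Let M := invmx U *m diag_mx d *m U.
Definition cnt t := #|[pred j : 'I_n | t < d 0 j]|.

Lemma UtU : U ^t* *m U = 1%:M.
Proof. by rewrite -invmx_unitary // mulVmx // unitarymx_unit. Qed.

Lemma UUt : U *m U ^t* = 1%:M.
Proof. exact/unitarymxP. Qed.

Lemma qfE x : qf M x = \sum_j d 0 j * ((x *m U^t*) 0 j * ((x *m U^t*) 0 j)^*).
Proof.
rewrite /qf /M invmx_unitary //.
have -> : x *m (U ^t* *m diag_mx d *m U) *m x ^t* =
          (x *m U^t*) *m diag_mx d *m (x *m U ^t*) ^t*.
  by rewrite trmx_mul map_mxM trmxCK !mulmxA.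
rewrite mxE; apply: eq_bigr => j _.
by rewrite mul_mx_diag !mxE mulrCA mulrA.
Qed.

Lemma q1U x : q1 x = q1 (x *m U^t*).
Proof.
by rewrite /q1 trmx_mul map_mxM trmxCK mulmxA -(mulmxA x) UtU mulmx1.
Qed.

Section Sel.
Variable P : {pred 'I_n}.
Let E := rowsub (fun i : 'I_#|P| => enum_val i) U.

Lemma rank_sel : \rank E = #|P|.
Proof.
apply/eqP; rewrite -/(row_free E); apply/row_freeP; exists (E ^t*).
apply/matrixP => i k; have := congr1 (fun N : 'M_n => N (enum_val i) (enum_val k)) UUt.
rewrite /= !mxE (inj_eq enum_val_inj) => <-; apply: eq_bigr => j _.
by rewrite !mxE.
Qed.

Lemma sel_zero (x : 'rV[C]_n) j : (x <= E)%MS -> j \notin P -> (x *m U ^t*) 0 j = 0.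
Proof.
move=> /submxP [y ->] jP; rewrite -mulmxA mul_rowsub_mx UUt mxE.
apply: big1 => i _; rewrite !mxE.
have : enum_val i != j by apply: contraNneq jP => <-; exact: enum_valP.
by move/negbTE ->; rewrite mulr0.
Qed.
End Sel.


Lemma upper m (W : 'M[C]_(m, n)) t : t \is Num.real ->
  (forall x : 'rV_n, (x <= W)%MS -> x != 0 -> t * q1 x < qf M x) ->
  (\rank W <= cnt t)%N.
Proof.
move=> tr H; rewrite leqNgt; apply/negP => lt.
set S := [pred j : 'I_n | ~~ (t < d 0 j)].
have cS : (cnt t + #|S| = n)%N.
  by rewrite /cnt cardC card_ord.
have rE := rank_sel S.
set E := rowsub _ U in rE.
have : (W :&: E)%MS != 0.
  rewrite -mxrank_eq0 -lt0n; have := mxrank_sum_cap W E; have := rank_leq_col (W + E)%MS.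
  move=> h1 h2; rewrite rE in h2; exact: (natfact lt cS h1 h2).
case/rowV0Pn => x xWE xn0.
have xW : (x <= W)%MS by apply: submx_trans xWE (capmxSl _ _).
have xE : (x <= E)%MS by apply: submx_trans xWE (capmxSr _ _).
have := H x xW xn0; rewrite qfE q1U q1E.
set y := x *m U ^t*.
suff HH : (\sum_j d 0 j * (y 0 j * (y 0 j)^*) <= t * \sum_j y 0 j * (y 0 j)^*).
  by move/lt_geF; rewrite HH.
rewrite mulr_sumr; apply: ler_sum => j _; case: (boolP (j \in S)) => jS.
  apply: ler_wpM2r; first exact: mul_conjC_ge0.
  by rewrite real_leNgt.
by rewrite /y (sel_zero xE jS) mul0r !mulr0.
Qed.


Lemma rowV_neq0 (x : 'rV[C]_n) : x != 0 -> exists j, x 0 j != 0.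
Proof.
move=> xn0; apply/existsP; apply: contraR xn0 => /existsPn H; apply/eqP/rowP => j.
by rewrite mxE; apply/eqP; move: (H j); rewrite negbK.
Qed.

Lemma lower t : t \is Num.real -> exists k, exists W : 'M[C]_(k, n),
  \rank W = cnt t /\ forall x, (x <= W)%MS -> x != 0 -> t * q1 x < qf M x.
Proof.
move=> tr; set S := [pred j : 'I_n | t < d 0 j].
exists #|S|, (rowsub (fun i : 'I_#|S| => enum_val i) U); split; first exact: rank_sel.
move=> x xE xn0; rewrite qfE q1U q1E; set y := x *m U ^t*.
have yn0 : y != 0.
  apply: contraNneq xn0 => y0; have : x = y *m U by rewrite /y -mulmxA UtU mulmx1.
  by rewrite y0 mul0mx => ->.
have [j yj] := rowV_neq0 yn0.
have jS : j \in S by apply: contraR yj => jS; rewrite /y (sel_zero xE jS).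
rewrite -subr_gt0 mulr_sumr -sumrB (bigD1 j) //=.
have H1 : 0 < d 0 j * (y 0 j * (y 0 j)^*) - t * (y 0 j * (y 0 j)^*).
  by rewrite -mulrBl mulr_gt0 // ?subr_gt0 // mul_conjC_gt0.
have H2 : 0 <= \sum_(i < n | i != j) (d 0 i * (y 0 i * (y 0 i)^*) - t * (y 0 i * (y 0 i)^*)).
  apply: sumr_ge0 => k _; rewrite -mulrBl; case: (boolP (k \in S)) => kS.
    by rewrite mulr_ge0 ?mul_conjC_ge0 // subr_ge0 ltW.
  by rewrite /y (sel_zero xE kS) mul0r mulr0.
by have := ltr_leD H1 H2; rewrite addr0.
Qed.

End Core.

Section Transfer.
Variable C : numClosedFieldType.
Variable n : nat.
Variables (Pm A : 'M[C]_n).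
Hypothesis Ph : Pm ^t* = Pm.
Hypothesis Pi : Pm *m Pm = Pm.

Lemma qf_proj (x : 'rV[C]_n) : qf A (x *m Pm) = qf (Pm *m A *m Pm) x.
Proof. by rewrite /qf trmx_mul map_mxM Ph !mulmxA. Qed.

Lemma q1_proj (x : 'rV[C]_n) : q1 (x *m Pm) <= q1 x.
Proof.
set a := x *m Pm; set b := x *m (1%:M - Pm).
have xab : x = a + b by rewrite /a /b -mulmxDr addrC subrK mulmx1.
have Q : (1%:M - Pm) ^t* = 1%:M - Pm.
  by rewrite linearB /= trmx1 map_mxB map_mx1 Ph.
have ab : a *m b ^t* = 0.
  by rewrite /a /b trmx_mul map_mxM Q -mulmxA (mulmxA Pm) mulmxBr mulmx1 Pi subrr mul0mx mulmx0.
have ba : b *m a ^t* = 0.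
  by rewrite /a /b trmx_mul map_mxM Ph -mulmxA (mulmxA _ Pm) mulmxBl mul1mx Pi subrr mul0mx mulmx0.
rewrite [in X in _ <= X]xab /q1 linearD /= map_mxD mulmxDl !mulmxDr ab ba addr0 add0r.
have addE (X Y : 'M[C]_1) : (X + Y) 0 0 = X 0 0 + Y 0 0 by rewrite mxE.
by rewrite addE lerDl -/(q1 b) q1_ge0.
Qed.

Lemma cnt_transfer (UA UB : 'M[C]_n) (dA dB : 'rV[C]_n) t :
  UA \is unitarymx -> (forall j, dA 0 j \is Num.real) ->
  A = invmx UA *m diag_mx dA *m UA ->
  UB \is unitarymx ->
  Pm *m A *m Pm = invmx UB *m diag_mx dB *m UB ->
  t \is Num.real -> 0 <= t -> (cnt dB t <= cnt dA t)%N.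
Proof.
move=> UAu dAr AE UBu BE tr t0.
have [k [W [rW HW]]] := lower dB UBu tr.
rewrite -BE in HW.
have inj : (W :&: kermx Pm)%MS == 0.
  apply/rowV0P => v vWK; apply/eqP; apply: contraT => vn0.
  have vW : (v <= W)%MS by apply: submx_trans vWK (capmxSl _ _).
  have vK : v *m Pm = 0 by apply/sub_kermxP; apply: submx_trans vWK (capmxSr _ _).
  have := HW v vW vn0; rewrite -qf_proj vK /qf !mul0mx mxE.
  by move/(le_lt_trans (mulr_ge0 t0 (q1_ge0 v))); rewrite ltxx.
rewrite -rW -(mxrank_injP _ inj).
apply: (upper UAu dAr tr) => x /submxP [z ->] xn0.
rewrite -AE mulmxA qf_proj.
have zWn0 : z *m W != 0 by apply: contraNneq xn0 => zW; rewrite mulmxA zW mul0mx.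
apply: le_lt_trans (HW _ (submxMl _ _) zWn0).
by apply: ler_wpM2l => //; exact: q1_proj.
Qed.
End Transfer.

Section RSide.
Variable R : realType.
Notation rc := (real_complex R).

Lemma rc_conj (x : R) : (rc x)^* = rc x. Proof. exact: conjc_real. Qed.
Lemma rc_real (x : R) : rc x \is Num.real. Proof. by rewrite CrealE rc_conj. Qed.

Lemma herm_of_sym n (M : 'M[R]_n) : M^T = M -> (M ^ rc) \is hermsymmx.
Proof.
move=> MT; apply/is_hermitianmxP; rewrite expr0 scale1r; apply/matrixP => i j.
by rewrite !mxE rc_conj -{1}MT mxE.
Qed.

Lemma spec n (M : 'M[R]_n) : M^T = M -> exists U, exists d : 'rV[R[i]]_n,
  [/\ U \is unitarymx, forall j, d 0 j \is Num.real,
      M ^ rc = invmx U *m diag_mx d *m U,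
      eigen_seq M = sort <=%R [seq complex.Re (d 0 j) | j <- enum 'I_n] &
      char_poly M = \prod_(x <- eigen_seq M) ('X - x%:P)].
Proof.
move=> MT; have H := herm_of_sym MT.
set U := spectralmx (map_mx rc M); set d := spectral_diag (map_mx rc M).
have /orthomx_spectralP ME := hermitian_normalmx H.
have dreal : forall j, d 0 j \is Num.real.
  by move=> j; have /mxOverP := hermitian_spectral_diag_real H; apply.
have dE : forall j, rc (complex.Re (d 0 j)) = d 0 j by move=> j; exact: RRe_real.
pose s := sort <=%R [seq complex.Re (d 0 j) | j <- enum 'I_n].
have cp : char_poly M = \prod_(x <- s) ('X - x%:P).
  apply: (map_poly_inj rc); rewrite map_char_poly ME char_poly_conj ?spectral_unit //.
  rewrite char_poly_trig ?diag_mx_is_trig // map_prod_XsubC.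
  rewrite (perm_big _ (permEl (perm_sort _ _))) /= big_map big_enum /=.
  by apply: eq_bigr => i _; rewrite mxE eqxx mulr1n dE.
have ex : exists s : seq R, sorted <=%R s /\ char_poly M = \prod_(x <- s) ('X - x%:P).
  by exists s; split => //; apply: sort_sorted; exact: le_total.
have [srt cpE] := epsilon_spec (inhabits [::]) _ ex.
have eE : eigen_seq M = s.
  rewrite /eigen_seq; apply: (sorted_eq le_trans le_anti srt).
    by apply: sort_sorted; exact: le_total.
  by apply: prod_XsubC_eq; rewrite -cpE.
exists U, d; split => //; exact: spectral_unitarymx.
Qed.

End RSide.
Section RSide2.
Variable R : realType.
Notation rc := (real_complex R).
Lemma count_cnt n (d : 'rV[R[i]]_n) (t : R) : (forall j, d 0 j \is Num.real) ->
  count (fun x => t < x) (sort <=%R [seq complex.Re (d 0 j) | j <- enum 'I_n])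
  = cnt d (rc t).
Proof.
move=> dr; rewrite count_sort count_map /cnt cardE /enum_mem size_filter.
rewrite count_filter; apply: eq_count => j /=.
by rewrite andbT -ltcR (RRe_real (dr j)).
Qed.

Lemma sorted_cmp (s1 s2 : seq R) : sorted <=%R s1 -> sorted <=%R s2 ->
  size s1 = size s2 ->
  (forall t, 0 <= t -> (count (fun x => (t < x)%R) s1 <= count (fun x => (t < x)%R) s2)%N) ->
  (forall x, x \in s2 -> 0 <= x) ->
  forall i, (i < size s1)%N -> nth 0 s1 i <= nth 0 s2 i.
Proof.
move=> so1 so2 sz H pos i ilt; rewrite leNgt; apply/negP => lt.
set t := nth 0 s2 i in lt.
have t0 : 0 <= t by apply: pos; apply: mem_nth; rewrite -sz.
have := H t t0.
have A1 : all (fun x => t < x) (drop i s1).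
  apply/(all_nthP 0) => k; rewrite size_drop nth_drop => kl.
  apply: (lt_le_trans lt); apply: (sorted_leq_nth le_trans lexx) => //; rewrite ?inE.
  all: try (rewrite -ltn_subRL; exact: kl).
  all: try exact: leq_addr.
  all: try exact: ilt.
have A2 : ~~ has (fun x => t < x) (take i.+1 s2).
  rewrite -all_predC; apply/(all_nthP 0) => k; rewrite size_take => kl.
  have kl' : (k < i.+1)%N.
    by move: kl; case: ifP => // h kl; apply: leq_trans kl _; rewrite leqNgt h.
  have is2 : (i < size s2)%N by rewrite -sz.
  have ks2 : (k < size s2)%N by apply: leq_ltn_trans is2; rewrite -ltnS.
  rewrite /= nth_take // -leNgt /t; apply: (sorted_leq_nth le_trans lexx) => //.
rewrite -(cat_take_drop i s1) -(cat_take_drop i.+1 s2) !count_cat.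
move: A1 A2; rewrite all_count has_count => /eqP -> /negbTE.
have := count_size (fun x => t < x) (drop i.+1 s2).
rewrite !size_drop => h1 /negbT; rewrite -leqNgt leqn0 => /eqP ->; rewrite add0n => h3.
have := leq_trans (leq_trans (leq_addl _ _) h3) h1.
rewrite -sz subnS.
have p : (0 < size s1 - i)%N by rewrite subn_gt0.
by move: p; case: (size s1 - i)%N => // m _; rewrite /= ltnn.
Qed.

Lemma psd_eig_ge0 n (A : 'M[R]_n) : psdmx A -> forall x, x \in eigen_seq A -> 0 <= x.
Proof.
case=> AT Hq x xin.
have [U [d [_ _ _ _ cp]]] := spec AT.
have : eigenvalue A x by rewrite eigenvalue_root_char cp root_prod_XsubC.
case/eigenvalueP => v vA vn0.
have [j vj] : exists j, v 0 j != 0.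
  apply/existsP; apply: contraR vn0 => /existsPn H; apply/eqP/rowP => k.
  by rewrite mxE; apply/eqP; move: (H k); rewrite negbK.
have pos : 0 < (v *m v^T) 0 0.
  rewrite mxE (bigD1 j) //=.
  have H1 : 0 < v 0 j * v^T j 0 by rewrite mxE -expr2 lt0r sqr_ge0 andbT sqrf_eq0.
  have H2 : 0 <= \sum_(i < n | i != j) v 0 i * v^T i 0.
    by apply: sumr_ge0 => k _; rewrite mxE -expr2 sqr_ge0.
  by have := ltr_leD H1 H2; rewrite addr0.
have := Hq v^T; rewrite trmxK vA -scalemxAl mxE.
by rewrite pmulr_lge0.
Qed.
End RSide2.

Theorem corollary3p7 (R : realType) (n : nat) (A P : 'M[R]_n) (T : nat) (u : R) :
  psdmx A -> orth_projmx P -> (1 <= T <= n)%N -> lambda_max A < u ->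
  \sum_(n - T <= i < n) (u - eigval (P *m A *m P) i)^-1
    <= \sum_(n - T <= i < n) (u - eigval A i)^-1.
Proof.
move=> psdA [PT PP] /andP [T1 Tn] ulam.
have AT := psdA.1.
set B := P *m A *m P.
have BT : B^T = B by rewrite /B !trmx_mul PT AT mulmxA.
have [UA [dA [UAu dAr AE eA cpA]]] := spec AT.
have [UB [dB [UBu dBr BE eB cpB]]] := spec BT.
set Pc := map_mx (real_complex R) P.
have Ph : Pc ^t* = Pc.
  by apply/matrixP => i j; rewrite !mxE rc_conj -{1}PT mxE.
have Pi : Pc *m Pc = Pc by rewrite -map_mxM PP.
have BcE : Pc *m map_mx (real_complex R) A *m Pc = invmx UB *m diag_mx dB *m UB.
  by rewrite -!map_mxM.
have cntle : forall t : R, 0 <= t ->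
    (count (fun x => (t < x)%R) (eigen_seq B) <= count (fun x => (t < x)%R) (eigen_seq A))%N.
  move=> t t0; rewrite eA eB !count_cnt //.
  apply: (cnt_transfer Ph Pi UAu dAr AE UBu BcE (rc_real t)).
  by rewrite ler0c.
have szA : size (eigen_seq A) = n by rewrite eA size_sort size_map size_enum_ord.
have szB : size (eigen_seq B) = n by rewrite eB size_sort size_map size_enum_ord.
have srtA : sorted <=%R (eigen_seq A).
  by rewrite eA; apply: sort_sorted; exact: le_total.
have srtB : sorted <=%R (eigen_seq B).
  by rewrite eB; apply: sort_sorted; exact: le_total.
have le_i : forall i, (i < n)%N -> eigval B i <= eigval A i.
  move=> i ilt; apply: (sorted_cmp srtB srtA _ cntle (psd_eig_ge0 psdA)).
    by rewrite szA szB.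
  by rewrite szB.
have lam : forall i, (i < n)%N -> eigval A i < u.
  move=> i ilt; apply: le_lt_trans ulam; rewrite /lambda_max /eigval.
  apply: (sorted_leq_nth le_trans lexx) => //.
  - by rewrite inE /= szA.
  - by rewrite inE /= szA (ltn_predK ilt).
  - by rewrite -ltnS (ltn_predK ilt).
apply: ler_sum_nat => i /andP [_ ilt].
have h1 : 0 < u - eigval A i by rewrite subr_gt0 lam.
have h2 : 0 < u - eigval B i by rewrite subr_gt0 (le_lt_trans (le_i i ilt) (lam i ilt)).
by rewrite lef_pV2 ?posrE // lerD2l lerN2 le_i.
Qed.
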